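(* Let $n\geq1$, $q\geq2$ and $k\geq0$ be integers. (1) For every $j\in\{0,1,\dots,n\}$, $E_{\nu_n^{*k}}(\phi_j)=\left(1-\frac{jq}{n(q-1)}\right)^k$. (2) If moreover $(n-2)(q-1)\geq 2$, then $\mathrm{Var}_{\nu_n^{*k}}(\phi_1)\leq\frac1n$.
   Context: $X_n=\{0,\dots,q-1\}^n$, $x^{(0)}=(0,\dots,0)$, $d(x,y)=\#\{i:x_i\neq y_i\}$. The simple random walk on $X_n$ has transition probability $p_n(x,x')=\frac{1}{n(q-1)}$ if $d(x,x')=1$ and $0$ otherwise; $p_n^{(k)}$ is the $k$-step transition probability ($p_n^{(0)}(x,x')=\delta_{x,x'}$) and $\nu_n^{*k}(x)=p_n^{(k)}(x^{(0)},x)$. For $j\in\{0,\dots,n\}$, $\phi_j(x)=\sum_{r=0}^{j}\frac{(-j)_r(-l)_r}{(-n)_r\,r!}\left(\frac{q}{q-1}\right)^r$ with $l=d(x^{(0)},x)$ and $(\alpha)_r=\alpha(\alpha+1)\cdots(\alpha+r-1)$, $(\alpha)_0=1$. For a probability measure $\mu$ and function $f$ on $X_n$, $E_\mu(f)=\sum_x f(x)\mu(x)$ and $\mathrm{Var}_\mu(f)=E_\mu(f^2)-E_\mu(f)^2$. *)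

(* Defs.v *)
From HB Require Import structures.
From mathcomp Require Import all_boot all_order all_algebra.
Set Implicit Arguments. Unset Strict Implicit. Unset Printing Implicit Defensive.
Import Order.TTheory GRing.Theory Num.Theory.
Local Open Scope ring_scope.

Definition X (n q : nat) := {ffun 'I_n -> 'I_q}.

Definition hdist (n q : nat) (x y : X n q) : nat := #|[set i | x i != y i]|.

Definition is_origin (n q : nat) (x : X n q) : bool := [forall i, val (x i) == 0%N].

Definition dist0 (n q : nat) (x : X n q) : nat := #|[set i | val (x i) != 0%N]|.

Definition trans (R : realFieldType) (n q : nat) (x y : X n q) : R :=
  if hdist x y == 1%N then 1 / (n * (q - 1))%:R else 0.

Fixpoint transk (R : realFieldType) (n q : nat) (k : nat) (x y : X n q) : R :=
  match k with
  | 0 => (x == y)%:R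
  | k'.+1 => \sum_(z : X n q) transk R k' x z * trans R z y
  end.

(* nu_n^{*k}(x) = p^(k)(x^(0), x); the origin is the unique y with is_origin y
   (for q >= 1), so the sum below has exactly one term. *)
Definition nuk (R : realFieldType) (n q k : nat) (x : X n q) : R :=
  \sum_(y : X n q | is_origin y) transk R k y x.

Definition poch (R : realFieldType) (a : R) (r : nat) : R :=
  \prod_(i < r) (a + i%:R).

Definition phi (R : realFieldType) (n q j : nat) (x : X n q) : R :=
  \sum_(r < j.+1)
    poch (- (j%:R)) r * poch (- ((dist0 x)%:R)) r
      / (poch (- (n%:R)) r * (r`!)%:R) * (q%:R / (q%:R - 1)) ^+ r.

Definition Exp (R : realFieldType) (T : finType) (mu f : T -> R) : R :=
  \sum_(x : T) f x * mu x.

Definition Var (R : realFieldType) (T : finType) (mu f : T -> R) : R :=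
  Exp mu (fun x => f x ^+ 2) - Exp mu f ^+ 2.

(* Main.v *)
Require Import Defs.
From HB Require Import structures.
From mathcomp Require Import all_boot all_order all_algebra.
From mathcomp Require Import ring lra zify.
Set Implicit Arguments. Unset Strict Implicit. Unset Printing Implicit Defensive.
Import Order.TTheory GRing.Theory Num.Theory.
Local Open Scope ring_scope.

Section Aux.
Variable R : realFieldType.

Lemma poch0 (a : R) : poch a 0 = 1.
Proof. by rewrite /poch big_ord0. Qed.

Lemma poch_recr (a : R) s : poch a s.+1 = poch a s * (a + s%:R).
Proof. by rewrite /poch big_ord_recr. Qed.

Lemma poch_recl (a : R) s : poch a s.+1 = a * poch (a + 1) s.
Proof.
rewrite /poch big_ord_recl /= addr0; congr (_ * _).
by apply: eq_bigr => i _; rewrite /bump /= natrD addrA.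
Qed.

Lemma poch_negN_neq0 n s : (s <= n)%N -> poch (- (n%:R : R)) s != 0.
Proof.
elim: s => [|s IH] Hs; first by rewrite poch0 oner_neq0.
rewrite poch_recr mulf_neq0 ?IH ?(ltnW Hs) //.
by rewrite addrC subr_eq0 eqr_nat ltn_eqF.
Qed.

Definition Fj (n q j : nat) (L : R) : R :=
  \sum_(r < j.+1) poch (- (j%:R)) r * poch (- L) r
      / (poch (- (n%:R)) r * (r`!)%:R) * (q%:R / (q%:R - 1)) ^+ r.

Definition cc (n q j r : nat) : R :=
  poch (- (j%:R)) r / (poch (- (n%:R)) r * (r`!)%:R) * (q%:R / (q%:R - 1)) ^+ r.

Lemma cc_rec n q j s : (s < n)%N -> (1 < q)%N ->
  (q%:R - 1) * s.+1%:R * (n%:R - s%:R) * cc n q j s.+1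
  = (j%:R - s%:R) * q%:R * cc n q j s.
Proof.
move=> Hs Hq.
have h1 := poch_negN_neq0 (ltnW Hs).
have h2 : - (n%:R : R) + s%:R != 0 by rewrite addrC subr_eq0 eqr_nat ltn_eqF.
have h3 : (s`!%:R : R) != 0 by rewrite pnatr_eq0 -lt0n fact_gt0.
have h4 : (s.+1%:R : R) != 0 by rewrite pnatr_eq0.
have h5 : (q%:R : R) - 1 != 0 by rewrite subr_eq0 -[1 in X in _ == X]/(1%:R) eqr_nat gtn_eqF.
rewrite /cc !poch_recr factS natrM exprS.
field; by rewrite nat1r h1 h2 h3 h4 h5.
Qed.

Lemma Ft n q j (L : R) :
  Fj n q j L = \sum_(r < j.+1) cc n q j r * poch (- L) r.
Proof. by apply: eq_bigr => r _; rewrite /cc; ring. Qed.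

Lemma key n q j (L : R) : (j <= n)%N -> (1 < q)%N ->
  L * Fj n q j (L - 1) + (n%:R - L) * (q%:R - 1) * Fj n q j (L + 1)
  + L * (q%:R - 2) * Fj n q j L
  = (n%:R * (q%:R - 1) - j%:R * q%:R) * Fj n q j L.
Proof.
move=> Hj Hq.
pose A r := (j%:R - r%:R) * q%:R * cc n q j r * poch (-L) r.
pose B r := (q%:R-1) * r%:R * (n%:R - r%:R + 1) * cc n q j r * poch (-L) r.-1.
have T : forall r, L * (cc n q j r * poch (-(L-1)) r)
  + (n%:R - L) * (q%:R - 1) * (cc n q j r * poch (-(L+1)) r)
  + L * (q%:R - 2) * (cc n q j r * poch (-L) r)
  - (n%:R * (q%:R - 1) - j%:R * q%:R) * (cc n q j r * poch (-L) r) = A r - B r.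
  case=> [|s].
    rewrite /A /B !poch0 /=; ring.
  have e1 : L * poch (-(L-1)) s.+1
      = - (poch (-L) s * (-L + s%:R)) * (-(L-1) + s%:R).
    rewrite poch_recr mulrA; congr (_ * _).
    have := poch_recl (-L) s; rewrite poch_recr => ->.
    have -> : -(L-1) = -L + 1 by ring.
    ring.
  have e2 : poch (-(L+1)) s.+1 = -(L+1) * poch (-L) s.
    by rewrite poch_recl; congr (_ * _); congr poch; ring.
  rewrite [L * (cc _ _ _ _ * _)]mulrCA e1 e2 /A /B /= poch_recr -natr1; ring.
apply/eqP; rewrite -subr_eq0; apply/eqP.
rewrite !Ft !mulr_sumr -!big_split -sumrB /=.
rewrite (eq_bigr (fun r : 'I_j.+1 => A r - B r) (fun r _ => T r)) sumrB big_ord_recr [X in _ - X]big_ord_recl /=.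
rewrite /A /B /= subrr !mul0r mulr0 !mul0r addr0 add0r.
apply/eqP; rewrite subr_eq0; apply/eqP.
apply: eq_bigr => i _; rewrite /bump /= add1n add0n.
have Hi : (i < n)%N by apply: leq_trans (ltn_ord i) Hj.
have -> : (q%:R - 1) * i.+1%:R * (n%:R - i.+1%:R + 1) * cc n q j i.+1 * poch (- L) i
   = ((q%:R - 1) * i.+1%:R * (n%:R - i%:R) * cc n q j i.+1) * poch (- L) i :> R.
  by rewrite -natr1; ring.
by rewrite cc_rec.
Qed.

Definition upd n q (x : X n q) (i : 'I_n) (a : 'I_q) : X n q :=
  [ffun k => if k == i then a else x k].

Lemma count_nb n q (x y : X n q) :
  \sum_i \sum_a ((a != x i) && (y == upd x i a))%:R = ((hdist x y == 1)%N%:R : R).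
Proof.
have E1 : forall i, \sum_a ((a != x i) && (y == upd x i a))%:R
    = ((y i != x i) && (y == upd x i (y i)))%:R :> R.
  move=> i; rewrite (bigD1 (y i)) //= big1 ?addr0 // => a Ha.
  case: (y =P upd x i a) => [Hy|]; last by rewrite andbF.
  by move: Ha; rewrite Hy ffunE eqxx eqxx.
have E2 : forall i, ((y i != x i) && (y == upd x i (y i)))
    = ([set k | x k != y k] == [set i]).
  move=> i; apply/andP/eqP.
  - case=> Hne /eqP Hy; apply/setP => k; rewrite !inE.
    case: (eqVneq k i) => [->|Hki]; first by rewrite eq_sym Hne.
    by rewrite Hy ffunE (negbTE Hki) eqxx.
  - move=> HD; have Hi : i \in [set k | x k != y k] by rewrite HD set11.
    rewrite inE eq_sym in Hi; split=> //; apply/eqP/ffunP => k; rewrite ffunE.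
    case: eqP => [->//|/eqP Hki].
    have : k \notin [set k | x k != y k] by rewrite HD inE.
    by rewrite inE negbK => /eqP ->.
rewrite (eq_bigr _ (fun i _ => E1 i)).
under eq_bigr => i _ do rewrite E2.
rewrite /hdist; case: (boolP (#|[set k | x k != y k]| == 1)%N) => H.
- move/cards1P: H => [i0 Hi0]; rewrite Hi0 (bigD1 i0) //= eqxx big1 ?addr0 //.
  by move=> i Hi; rewrite (inj_eq set1_inj) eq_sym (negbTE Hi).
- rewrite big1 // => i _; case: eqP => // HD; move: H; by rewrite HD cards1.
Qed.

Lemma sum_neighbors n q (x : X n q) (h : X n q -> R) :
  \sum_y trans R x y * h y
  = 1 / (n * (q - 1))%:R * \sum_i \sum_(a | a != x i) h (upd x i a).
Proof.
have -> : \sum_i \sum_(a | a != x i) h (upd x i a)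
    = \sum_i \sum_a \sum_y ((a != x i) && (y == upd x i a))%:R * h y.
  apply: eq_bigr => i _; rewrite big_mkcond; apply: eq_bigr => a _.
  rewrite (bigD1 (upd x i a)) //= eqxx andbT big1 ?addr0.
    by case: (a != x i); rewrite ?mul1r ?mul0r.
  by move=> y /negbTE ->; rewrite andbF mul0r.
rewrite [X in _ = _ * X](eq_bigr (fun i =>
   \sum_y \sum_a ((a != x i) && (y == upd x i a))%:R * h y)); last first.
  by move=> i _; rewrite exchange_big.
rewrite exchange_big mulr_sumr; apply: eq_bigr => y _.
under eq_bigr => i _ do rewrite -mulr_suml.
rewrite -mulr_suml count_nb /trans.
by case: (hdist x y == 1)%N; rewrite ?mul1r ?mulr1 ?mul0r ?mulr0.
Qed.

Lemma dist0E n q (x : X n q) : dist0 x = (\sum_i (val (x i) != 0%N))%N.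
Proof.
rewrite /dist0 -sum1dep_card big_mkcond /=; apply: eq_bigr => i _.
by case: (_ != _).
Qed.

Lemma dist0_upd n q (x : X n q) i a :
  (dist0 (upd x i a) + (val (x i) != 0%N) = dist0 x + (val a != 0%N))%N.
Proof.
rewrite !dist0E (bigD1 i) //= [in RHS](bigD1 i) //= ffunE eqxx.
rewrite (eq_bigr (fun k : 'I_n => nat_of_bool (nat_of_ord (x k) != 0%N))); first lia.

by move=> k Hk; rewrite ffunE (negbTE Hk).
Qed.

Lemma lump n q (G : R -> R) (x : X n q) : (1 < q)%N ->
  \sum_y trans R x y * G (dist0 y)%:R = 1 / (n * (q - 1))%:R *
   ((dist0 x)%:R * (G ((dist0 x)%:R - 1) + (q%:R - 2) * G (dist0 x)%:R)
    + (n%:R - (dist0 x)%:R) * ((q%:R - 1) * G ((dist0 x)%:R + 1))).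
Proof.
move=> Hq; rewrite sum_neighbors; congr (_ * _).
set L : R := (dist0 x)%:R.
pose z : 'I_q := @Ordinal q 0 (ltnW Hq).
have Ei : forall i, \sum_(a | a != x i) G (dist0 (upd x i a))%:R
   = (val (x i) != 0%N)%:R * (G (L - 1) + (q%:R - 2) * G L)
     + (val (x i) == 0%N)%:R * ((q%:R - 1) * G (L + 1)).
  move=> i.
  have D : forall a, (dist0 (upd x i a))%:R
      = L - (val (x i) != 0%N)%:R + (val a != 0%N)%:R :> R.
    move=> a; have := dist0_upd x i a; move/(congr1 (fun m => m%:R : R)).
    rewrite !natrD /L => H; lra.
  have S : \sum_(a | a != x i) G (dist0 (upd x i a))%:R
      = \sum_a G (dist0 (upd x i a))%:R - G L.
    by rewrite [\sum_a _](bigD1 (x i)) //= D subrK addrAC subrr add0r.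
  rewrite S (bigD1 z) //=.
  rewrite (eq_bigr (fun _ => G (L - (val (x i) != 0%N)%:R + 1))); last first.
    by move=> a Ha; rewrite D; have -> : (\val a != 0%N) = true by exact: Ha.
  rewrite (eq_bigl (fun a => a \in predC1 z)) // sumr_const cardC1 card_ord.
  rewrite -[G _ *+ _]mulr_natl -subn1 natrB ?(ltnW Hq) // D /=.
  case: (val (x i) == 0%N) => /=; rewrite ?subr0 ?addr0 ?subrK; ring.
rewrite (eq_bigr _ (fun i _ => Ei i)) big_split /= -!mulr_suml.
have -> : \sum_i ((val (x i) != 0%N)%:R : R) = L by rewrite /L dist0E natr_sum.
have -> : \sum_i ((val (x i) == 0%N)%:R : R) = n%:R - L.
  rewrite /L dist0E natr_sum -[n in n%:R]card_ord -sumr_const -sumrB.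
  by apply: eq_big => // i _; case: eqP => _ /=; rewrite ?subr0 ?subrr.
done.
Qed.

Lemma eig n q j (x : X n q) : (j <= n)%N -> (1 < q)%N -> (1 <= n)%N ->
  \sum_y trans R x y * @phi R n q j y
  = (1 - (j * q)%:R / (n * (q - 1))%:R) * @phi R n q j x.
Proof.
move=> Hj Hq Hn.
rewrite (eq_bigr (fun y => trans R x y * Fj n q j (dist0 y)%:R)) // lump //.
change (@phi R n q j x) with (Fj n q j (dist0 x)%:R).
set L : R := (dist0 x)%:R.
have -> : L * (Fj n q j (L - 1) + (q%:R - 2) * Fj n q j L)
    + (n%:R - L) * ((q%:R - 1) * Fj n q j (L + 1))
    = (n%:R * (q%:R - 1) - j%:R * q%:R) * Fj n q j L.
  by rewrite -key //; ring.
have hN : (n%:R : R) != 0 by rewrite pnatr_eq0 -lt0n.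
have hQ : (q%:R : R) - 1 != 0.
  by rewrite subr_eq0 -[1 in X in _ == X]/(1%:R) eqr_nat gtn_eqF.
rewrite !natrM natrB ?(ltnW Hq) //; field.
by rewrite hN hQ.
Qed.

Lemma iter_eig n q (f : X n q -> R) (lam : R) :
  (forall x, \sum_y trans R x y * f y = lam * f x) ->
  forall k x0, \sum_y transk R k x0 y * f y = lam ^+ k * f x0.
Proof.
move=> Hf; elim=> [|k IH] x0 /=.
  rewrite (bigD1 x0) //= eqxx mul1r big1 ?addr0 ?expr0 ?mul1r // => y Hy.
  by rewrite eq_sym (negbTE Hy) mul0r.
transitivity (\sum_z transk R k x0 z * (lam * f z)).
  under eq_bigr => y _ do rewrite mulr_suml.
  rewrite exchange_big /=; apply: eq_bigr => z _.
  by rewrite -Hf mulr_sumr; apply: eq_bigr => y _; rewrite mulrA.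
rewrite (eq_bigr (fun z => lam * (transk R k x0 z * f z))); last first.
  by move=> z _; rewrite mulrCA.
by rewrite -mulr_sumr IH exprS mulrA.
Qed.

Lemma Exp_nuk n q k (f : X n q -> R) lam (Hq : (0 < q)%N) :
  (forall x, \sum_y trans R x y * f y = lam * f x) ->
  Exp (@nuk R n q k) f = lam ^+ k * f [ffun _ => Ordinal Hq].
Proof.
move=> Hf; rewrite /Exp /nuk.
under eq_bigr => x _ do rewrite mulr_sumr.
rewrite exchange_big /=.
rewrite (big_pred1 [ffun _ => Ordinal Hq]); last first.
  move=> y; apply/forallP/eqP => [H|-> i]; last by rewrite ffunE.
  by apply/ffunP => i; rewrite ffunE; apply/val_inj/eqP/H.
rewrite -(iter_eig Hf); apply: eq_bigr => x _; exact: mulrC.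
Qed.

Lemma phi_origin n q j (Hq : (0 < q)%N) :
  @phi R n q j [ffun _ => Ordinal Hq] = 1.
Proof.
rewrite /phi; set d := dist0 _; have -> : d = 0%N.
  by rewrite /d dist0E big1 // => i _; rewrite ffunE.
rewrite big_ord_recl big1 ?addr0.
  by rewrite !poch0 /= expr0 !mulr1 invr1 mulr1.
move=> i _; have E : poch (- ((0%N)%:R) : R) i.+1 = 0 by rewrite poch_recl oppr0 mul0r.
by rewrite lift0 E !(mul0r, mulr0).
Qed.

Lemma phi0 n q (x : X n q) : @phi R n q 0 x = 1.
Proof. by rewrite /phi big_ord1 /= !poch0 expr0 !mulr1 invr1 mulr1. Qed.

Lemma phi_sq n q (x : X n q) : (3 <= n)%N -> (1 < q)%N ->
  @phi R n q 1 x ^+ 2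
  = 1 / ((q%:R - 1) * n%:R) * @phi R n q 0 x
    + (q%:R - 2) / ((q%:R - 1) * n%:R) * @phi R n q 1 x
    + (n%:R - 1) / n%:R * @phi R n q 2 x.
Proof.
move=> Hn Hq.
rewrite /phi; set L : R := (dist0 x)%:R.
rewrite !big_ord_recr !big_ord0 /= !poch_recr !poch0 /=.
rewrite !factS fact0 /=; field.
have hN : (n%:R : R) != 0 by rewrite pnatr_eq0 -lt0n (leq_trans _ Hn).
have hQ : (q%:R : R) - 1 != 0.
  by rewrite subr_eq0 -[1 in X in _ == X]/(1%:R) eqr_nat gtn_eqF.
have hN1 : - (n%:R : R) + 1 != 0.
  by rewrite addrC subr_eq0 -[1 in X in X == _]/(1%:R) eqr_nat ltn_eqF // (leq_trans _ Hn).
by rewrite hN hQ hN1.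
Qed.

Lemma Exp_lin (T : finType) (mu f g h : T -> R) a b c :
  Exp mu (fun x => a * f x + b * g x + c * h x)
  = a * Exp mu f + b * Exp mu g + c * Exp mu h.
Proof.
rewrite /Exp !mulr_sumr -!big_split; apply: eq_bigr => x _ /=; ring.
Qed.
End Aux.

Theorem lemma4p3 (R : realFieldType) (n q k : nat) :
  (1 <= n)%N -> (2 <= q)%N ->
  (forall j : nat, (j <= n)%N ->
     Exp (@nuk R n q k) (@phi R n q j)
     = (1 - (j * q)%:R / (n * (q - 1))%:R) ^+ k)
  /\
  ((2 <= (n - 2) * (q - 1))%N ->
     Var (@nuk R n q k) (@phi R n q 1) <= 1 / n%:R).
Proof.
move=> Hn Hq.
have Hq0 : (0 < q)%N by apply: ltnW.
have P1 : forall j : nat, (j <= n)%N ->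
     Exp (@nuk R n q k) (@phi R n q j)
     = (1 - (j * q)%:R / (n * (q - 1))%:R) ^+ k.
  move=> j Hj; rewrite (@Exp_nuk R n q k _ (1 - (j * q)%:R / (n * (q - 1))%:R) Hq0); last by move=> x; exact: eig.
  by rewrite phi_origin mulr1.
split => // H2.
have Hn3 : (3 <= n)%N.
  case: (leqP 3 n) => // Hlt; move: H2.
  by have -> : (n - 2 = 0)%N by lia.
have H2q : (2 * q <= n * (q - 1))%N.
  move: H2; rewrite mulnBl; nia.
rewrite /Var.
rewrite (_ : Exp _ (fun x => _ ^+ 2) = Exp (@nuk R n q k) (fun x =>
    1 / ((q%:R - 1) * n%:R) * @phi R n q 0 x
    + (q%:R - 2) / ((q%:R - 1) * n%:R) * @phi R n q 1 x
    + (n%:R - 1) / n%:R * @phi R n q 2 x)); last first.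
  by apply: eq_bigr => x _; rewrite phi_sq.
rewrite Exp_lin !P1 // ?(leq_trans _ Hn3) //.
rewrite mul0n mul0r subr0 expr1n mulr1 mul1n.
set D : R := (n * (q - 1))%:R.
have DE : D = n%:R * (q%:R - 1) by rewrite /D natrM natrB ?(ltnW Hq).
have Dpos : 0 < D by rewrite /D ltr0n muln_gt0 (leq_trans _ Hn) // subn_gt0.
have QD : 2 * q%:R <= D by rewrite /D -natrM ler_nat.
have Q2 : (2 : R) <= q%:R by rewrite -[2]/(2%:R) ler_nat.
have N3 : (3 : R) <= n%:R by rewrite -[3]/(3%:R) ler_nat.
set t : R := q%:R / D.
have tD : t * D = q%:R by rewrite /t mulfVK // gt_eqF.
have t0 : 0 <= t by rewrite /t divr_ge0 // ltW.
have t2 : 2 * t <= 1.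
  have : 2 * t * D <= 1 * D by rewrite -mulrA tD mul1r.
  by rewrite ler_pM2r.
have e1 : (q%:R / D) = t by [].
rewrite (_ : (2 * q)%:R / D = 2 * t); last by rewrite natrM /t mulrA.

set a := (1 - t) ^+ k.
set b := (1 - 2 * t) ^+ k.
have a0 : 0 <= a by rewrite /a exprn_ge0 //; lra.
have a1 : a <= 1 by rewrite /a exprn_ile1 //; lra.
have ba : b <= a ^+ 2.
  apply: (le_trans (ler_norm b)).
  rewrite /b /a normrX exprAC.
  apply: lerXn2r; rewrite ?nnegrE ?normr_ge0 ?sqr_ge0 //.
  rewrite ler_norml; apply/andP; split; nra.
have hN : (n%:R : R) != 0 by rewrite pnatr_eq0 -lt0n (leq_trans _ Hn).
have hQ : (q%:R : R) - 1 != 0 by apply/eqP => h; move: Q2; rewrite -(subrK 1 q%:R) h; lra.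
have E : 1 / n%:R - (1 / ((q%:R - 1) * n%:R) + (q%:R - 2) / ((q%:R - 1) * n%:R) * a
     + (n%:R - 1) / n%:R * b - a ^+ 2)
   = ((q%:R - 2) * (1 - a) + (q%:R - 1) * a ^+ 2 + (n%:R - 1) * (q%:R - 1) * (a ^+ 2 - b))
     / (n%:R * (q%:R - 1)).
  by field; rewrite hN hQ.
rewrite -subr_ge0 E divr_ge0 //; last by rewrite -DE ltW.
have q2 : 0 <= q%:R - 2 :> R by lra.
have q1 : 0 <= q%:R - 1 :> R by lra.
have n1 : 0 <= n%:R - 1 :> R by lra.
rewrite !addr_ge0 // ?mulr_ge0 ?sqr_ge0 //; lra.
Qed.
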